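(* Consider the system $x^+=f(x)$, $y=h(x)$ with $f:\mathcal{X}\to\mathcal{X}$, $h:\mathcal{X}\to\mathcal{Y}$, $\mathcal{X}\subset\mathbb{R}^n$, $\mathcal{Y}\subset\mathbb{R}^m$. Suppose: (A1) there exists an integer $p\ge1$ such that for every $x\in\mathcal{X}$ the set $[x]_{p-1}$ is either a singleton or empty; and (A2) for all $x,\hat x\in\mathcal{X}$ and all $k\in\{0,1,2,\ldots\}$, $\hat x\in[x]_k^+$ implies $[\hat x]_k^+=[x]_k^+$. Let $p$ be as in (A1) and define $\pi:\mathcal{X}\times\mathcal{Y}\to\{-1,0,1,\ldots,p-2\}$ by $$\pi(\hat x,y):=\max\{\,j\in\{-1,0,\ldots,p-2\}:\ [\hat x]_j^+\cap h^{-1}(y)\neq\emptyset\,\}.$$ Then the system $$\hat x^+\in f\big([\hat x]^+_{\pi(\hat x,y)}\cap h^{-1}(y)\big)$$ is a deadbeat observer for $x^+=f(x)$, $y=h(x)$.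
   Context: Inverse images are set-valued: $f^{-1}(x):=\{\eta\in\mathcal{X}: f(\eta)=x\}$ (empty if $x\notin f(\mathcal{X})$), $h^{-1}(y):=\{\eta\in\mathcal{X}:h(\eta)=y\}$; images of sets are $f(S)=\{f(s):s\in S\}$ and for a set $S$, $[S]_k:=\bigcup_{s\in S}[s]_k$. Define $[x]_0:=h^{-1}(h(x))$, and for $k\ge0$: $[x]_k^+:=f([f^{-1}(x)]_k)$, $[x]_{k+1}:=[x]_k^+\cap[x]_0$; additionally $[x]_{-1}^+:=\mathcal{X}$. Solutions: $\phi(0,x)=x$, $\phi(k+1,x)=f(\phi(k,x))$. Given $g:\mathcal{X}\times\mathcal{Y}\rightrightarrows\mathcal{X}$, a solution of $\hat x^+\in g(\hat x,h(x))$ driven by $x^+=f(x)$ is any sequence $\psi(k,\hat x,x)$ with $\psi(0,\hat x,x)=\hat x$, $\psi(k+1,\hat x,x)\in g(\psi(k,\hat x,x),h(\phi(k,x)))$. The system $\hat x^+\in g(\hat x,y)$ is a deadbeat observer if there is an integer $q\ge1$ such that all such solutions satisfy $\psi(k,\hat x,x)=\phi(k,x)$ for all $x,\hat x\in\mathcal{X}$ and $k\ge q$. *)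

(* Defs.v *)
From Stdlib Require Import ZArith.
Open Scope Z_scope.

Section Sys.
Variables (X Y : Type) (f : X -> X) (h : X -> Y).

(* [x]_k : [x]_0 = h^{-1}(h x);
   [x]_{k+1} = f([f^{-1}(x)]_k) ∩ [x]_0 *)
Fixpoint cls (k : nat) (x : X) : X -> Prop :=
  match k with
  | O => fun e => h e = h x
  | S k' => fun e =>
      (exists eta, (exists s, f s = x /\ cls k' s eta) /\ f eta = e)
      /\ h e = h x
  end.

(* [x]_k^+ = f([f^{-1}(x)]_k) for k >= 0 *)
Definition plus (k : nat) (x : X) : X -> Prop :=
  fun e => exists eta, (exists s, f s = x /\ cls k s eta) /\ f eta = e.

(* [x]_j^+ for integer j >= -1, with [x]_{-1}^+ = X *)
Definition plusZ (j : Z) (x : X) : X -> Prop :=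
  if j <? 0 then (fun _ => True) else plus (Z.to_nat j) x.

Definition is_pi (p : nat) (xh : X) (y : Y) (j : Z) : Prop :=
  -1 <= j <= Z.of_nat p - 2
  /\ (exists e, plusZ j xh e /\ h e = y)
  /\ (forall j', j < j' <= Z.of_nat p - 2 ->
        ~ (exists e, plusZ j' xh e /\ h e = y)).

Definition obs_g (p : nat) (xh : X) (y : Y) : X -> Prop :=
  fun z => exists j, is_pi p xh y j /\
    exists eta, (plusZ j xh eta /\ h eta = y) /\ f eta = z.

Definition phi (k : nat) (x : X) : X := Nat.iter k f x.

Definition deadbeat (g : X -> Y -> X -> Prop) : Prop :=
  exists q : nat, (1 <= q)%nat /\
    forall (x xh : X) (psi : nat -> X),
      psi O = xh ->
      (forall k, g (psi k) (h (phi k x)) (psi (S k))) ->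
      forall k, (q <= k)%nat -> psi k = phi k x.

End Sys.
Arguments cls {X Y}.
Arguments plus {X Y}.
Arguments plusZ {X Y}.
Arguments is_pi {X Y}.
Arguments obs_g {X Y}.
Arguments phi {X}.
Arguments deadbeat {X Y}.

(* Main.v *)
Require Import Defs.
From Stdlib Require Import ZArith Lia.

Lemma cls_mono (X Y : Type) (f : X -> X) (h : X -> Y) :
  forall k s e, cls f h (S k) s e -> cls f h k s e.
Proof.
  induction k as [|k IH]; intros s e H.
  - simpl in *. tauto.
  - destruct H as [[eta [[s0 [Hs0 Hc]] He]] Hh].
    split; [|exact Hh]. exists eta. split; [|exact He].
    exists s0. split; [exact Hs0|]. apply IH. exact Hc.
Qed.

Lemma plus_mono_le (X Y : Type) (f : X -> X) (h : X -> Y) :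
  forall n m, (n <= m)%nat -> forall s e, plus f h m s e -> plus f h n s e.
Proof.
  intros n m Hle. induction Hle as [|m Hle IH]; intros s e H; [exact H|].
  apply IH. destruct H as [eta [[s0 [Hs0 Hc]] He]].
  exists eta. split; [|exact He]. exists s0. split; [exact Hs0|].
  apply cls_mono. exact Hc.
Qed.

Lemma step_lemma (X Y : Type) (f : X -> X) (h : X -> Y) (p : nat) :
  (forall (x xh : X) (k : nat), plus f h k x xh ->
     forall e, plus f h k xh e <-> plus f h k x e) ->
  forall xh x xh' m, obs_g f h p xh (h x) xh' -> (m <= p - 1)%nat ->
  (forall m', m = S m' -> plus f h m' xh x) ->
  exists eta, f eta = xh' /\ cls f h m eta x /\ cls f h m eta eta.
Proof.
  intros A2 xh x xh' m [j [[Hj [Hex Hmax]] [eta [[Hpe Hhe] Hfe]]]] Hm Hx.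
  exists eta. split; [exact Hfe|].
  destruct m as [|m'].
  - simpl. split; [congruence|reflexivity].
  - assert (Hx' := Hx m' eq_refl).
    assert (Hjm : (Z.of_nat m' <= j)%Z).
    { destruct (Z_le_gt_dec (Z.of_nat m') j) as [E|E]; [exact E|].
      exfalso. apply (Hmax (Z.of_nat m')). { lia. }
      exists x. split; [|reflexivity].
      unfold plusZ. replace (Z.of_nat m' <? 0)%Z with false by (symmetry; apply Z.ltb_ge; lia).
      rewrite Nat2Z.id. exact Hx'. }
    unfold plusZ in Hpe.
    replace (j <? 0)%Z with false in Hpe by (symmetry; apply Z.ltb_ge; lia).
    assert (Hpe' : plus f h m' xh eta).
    { apply (plus_mono_le X Y f h m' (Z.to_nat j)); [lia|exact Hpe]. }
    assert (E1 := A2 xh eta m' Hpe').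
    assert (E2 := A2 xh x m' Hx').
    split.
    + split; [|congruence]. apply E1. exact Hx'.
    + split; [|reflexivity]. apply E1. exact Hpe'.
Qed.

Theorem theorem3 (X Y : Type) (f : X -> X) (h : X -> Y) (p : nat) :
  (1 <= p)%nat ->
  (* (A1) [x]_{p-1} is a singleton or empty *)
  (forall x : X,
     (exists z, forall e, cls f h (p - 1) x e <-> e = z)
     \/ (forall e, ~ cls f h (p - 1) x e)) ->
  (* (A2) *)
  (forall (x xh : X) (k : nat), plus f h k x xh ->
     forall e, plus f h k xh e <-> plus f h k x e) ->
  deadbeat f h (obs_g f h p).
Proof.
  intros Hp A1 A2. exists p. split; [exact Hp|].
  intros x xh psi H0 Hstep.
  assert (Inv : forall k m, (m + 1 <= k)%nat -> (m <= p - 1)%nat ->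
            plus f h m (psi k) (phi f k x)).
  { induction k as [|k IH]; intros m Hk Hm; [lia|].
    destruct (step_lemma X Y f h p A2 (psi k) (phi f k x) (psi (S k)) m
                (Hstep k) Hm) as [eta [Hfe [Hc1 Hc2]]].
    { intros m' ->. apply IH; lia. }
    rewrite <- Hfe. exists (phi f k x). split; [|reflexivity].
    exists eta. split; [reflexivity|exact Hc1]. }
  intros k Hk. destruct k as [|k]; [lia|].
  destruct (step_lemma X Y f h p A2 (psi k) (phi f k x) (psi (S k)) (p - 1)
              (Hstep k) (le_n _)) as [eta [Hfe [Hc1 Hc2]]].
  { intros m' Hm'. apply Inv; lia. }
  destruct (A1 eta) as [[z Hz] | Hn].
  - apply Hz in Hc1. apply Hz in Hc2. subst. simpl. congruence.
  - exfalso. exact (Hn _ Hc2).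
Qed.
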